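(* Let $(S,+)$ be an uncountable semigroup with no idempotent element. Then the following are equivalent: (a) every uncountable IP set $A\subseteq S$ can be partitioned into uncountably many pairwise disjoint sets each of which is an IP set; (b) every uncountable subset of $S$ is an IP set.
   Context: $e$ is idempotent if $e+e=e$. For a sequence $\langle x_n\rangle_{n=1}^\infty$ in $S$, $\mathrm{FS}(\langle x_n\rangle_{n=1}^\infty)$ is the set of all sums $\sum_{n\in H}x_n$ (in increasing order of indices) with $H$ a nonempty finite subset of $\mathbb{N}$. $A\subseteq S$ is an IP set if $\mathrm{FS}(\langle x_n\rangle_{n=1}^\infty)\subseteq A$ for some sequence $\langle x_n\rangle_{n=1}^\infty$ in $S$. *)

(* Defs.v *)
From mathcomp Require Import all_boot.
From mathcomp Require Import boolp classical_sets cardinality.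
Set Implicit Arguments. Unset Strict Implicit. Unset Printing Implicit Defensive.
Local Open Scope classical_set_scope.

(* A nonempty finite H ⊆ ℕ is represented
   by its increasing enumeration i0 :: s with path ltn i0 s. *)
Definition fsum (S : Type) (op : S -> S -> S) (x : nat -> S) (i0 : nat) (s : seq nat) : S :=
  foldl (fun acc i => op acc (x i)) (x i0) s.

Definition FS (S : Type) (op : S -> S -> S) (x : nat -> S) : set S :=
  [set y | exists i0 s, path ltn i0 s /\ y = fsum op x i0 s].

Definition IPset (S : Type) (op : S -> S -> S) (A : set S) : Prop :=
  exists x : nat -> S, FS op x `<=` A.

Definition is_partition_of (S : Type) (P : set (set S)) (A : set S) : Prop :=
  (forall B C, P B -> P C -> B <> C -> B `&` C = set0) /\
  \bigcup_(B in P) B = A.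

(* Main.v *)
Require Import Defs.
From mathcomp Require Import all_boot.
From mathcomp Require Import boolp classical_sets cardinality.
Local Open Scope classical_set_scope.

Lemma subcnt T (A B : set T) : A `<=` B -> countable B -> countable A.
Proof. by move=> AB; apply: sub_countable; apply: subset_card_le. Qed.
Arguments subcnt {T A B}.

Lemma imgcnt T U (f : T -> U) (A : set T) : countable A -> countable (f @` A).
Proof. by apply: sub_countable; apply: card_image_le. Qed.

Lemma cntU T (A B : set T) : countable A -> countable B -> countable (A `|` B).
Proof.
move=> cA cB.
have : countable (\bigcup_(b in [set: bool]) (if b then A else B)).
  by apply: bigcup_countable => // -[].
apply: subcnt => z [Az|Bz]; [exists true | exists false] => //.
Qed.

Lemma FScnt S (op : S -> S -> S) x : countable (FS op x).
Proof.
have : countable ((fun p : nat * seq nat => fsum op x p.1 p.2) @` [set: nat * seq nat]).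
  exact: imgcnt.
apply: subcnt => z [i0 [s [_ ->]]]; by exists (i0, s).
Qed.

Lemma FS0 S (op : S -> S -> S) x : FS op x (x 0%N).
Proof. by exists 0%N, [::]. Qed.
Arguments cntU {T A B}.
Arguments FS0 {S}.

Lemma dir1 (S : Type) (op : S -> S -> S) :
  (forall A : set S, ~ countable A -> IPset op A ->
     exists P : set (set S),
       ~ countable P /\ is_partition_of P A /\ (forall B, P B -> IPset op B)) ->
  (forall A : set S, ~ countable A -> IPset op A).
Proof.
move=> Ha A Aunc.
have [a Aa] : exists a, A a.
  apply: contrapT => h; apply: Aunc.
  by apply: (@subcnt _ _ set0) => // z Az; apply: h; exists z.
pose y := fun _ : nat => a.
pose C := FS op y.
have [||P [Punc [[Pdisj Pcup] PIP]]] := Ha (A `|` C).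
- by move=> h; apply: Aunc; apply: subcnt h => z Az; left.
- by exists y => z Cz; right.
pose g := fun c : S => match pselect (exists B, P B /\ B c) with
  | left h => proj1_sig (cid h) | right _ => set0 end.
have Qc : countable [set B | P B /\ exists c, B c /\ C c].
  apply: (@subcnt _ _ (g @` C)); last exact/imgcnt/FScnt.
  move=> B [PB [c [Bc Cc]]]; exists c => //.
  rewrite /g; case: pselect => [h|]; last by move=> h; exfalso; apply: h; exists B.
  case: (cid h) => B' [PB' B'c] /=.
  apply: contrapT => neq.
  have := Pdisj _ _ PB' PB neq.
  by move=> /seteqP [/(_ c) h1 _]; apply: h1.
have [B [PB nQB]] : exists B, P B /\ ~ (exists c, B c /\ C c).
  apply: contrapT => /forallNP h; apply: Punc; apply: subcnt Qc => B PB.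
  split => //; have := h B; move=> /not_andP [//|]; exact: contrapT.
have [x Hx] := PIP B PB.
exists x => z /Hx Bz.
have : (A `|` C) z by rewrite -Pcup; exists B.
by case => // Cz; exfalso; apply: nQB; exists z.
Qed.

Lemma dir2 (S : Type) (op : S -> S -> S) :
  (forall A : set S, ~ countable A -> IPset op A) ->
  (forall A : set S, ~ countable A -> IPset op A ->
     exists P : set (set S),
       ~ countable P /\ is_partition_of P A /\ (forall B, P B -> IPset op B)).
Proof.
move=> Hb A Aunc _.
pose good := fun F : set (set S) =>
  (forall B, F B -> (exists x, B = FS op x) /\ B `<=` A) /\
  (forall B C, F B -> F C -> B <> C -> B `&` C = set0).
have [M [[Mmem Mdisj] Mmax]] : exists M, good M /\ forall N, M `<` N -> ~ good N.
  apply: Zorn_bigcup => Fs Fsg Ftot; split.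
  - by move=> B [F FsF FB]; exact: (Fsg F FsF).1 B FB.
  - move=> B C [F FsF FB] [G FsG GC].
    have [FG|GF] := Ftot F G FsF FsG.
    + exact: (Fsg G FsG).2 B C (FG B FB) GC.
    + exact: (Fsg F FsF).2 B C FB (GF C GC).
pose U := \bigcup_(B in M) B.
have UA : U `<=` A by move=> z [B MB Bz]; exact: (Mmem B MB).2.
have Munc : ~ countable M.
  move=> Mc.
  have Uc : countable U.
    apply: bigcup_countable => // B MB.
    by have [[x ->] _] := Mmem B MB; exact: FScnt.
  have [x Hx] : IPset op (A `\` U).
    apply: Hb => h; apply: Aunc; apply: (subcnt _ (cntU h Uc)) => z Az.
    by have [Uz|nUz] := pselect (U z); [right|left].
  have nUx : forall z, FS op x z -> ~ U z by move=> z /Hx [].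
  apply: (Mmax (M `|` [set FS op x])).
  - split; first by move=> B MB; left.
    move=> /(_ (FS op x)) h.
    have MF : M (FS op x) by apply: h; right.
    by apply: (nUx _ (FS0 op x)); rewrite /U; exists (FS op x) => //; exact: FS0.
  - split.
    + move=> B [MB|->]; first exact: Mmem.
      by split; [exists x | move=> z /Hx []].
    + have key : forall B, M B -> B `&` FS op x = set0.
        move=> B MB; rewrite -subset0 => z [Bz Fz].
        by apply: (nUx _ Fz); rewrite /U; exists B.
      move=> B C [MB|->] [MC|->] neq.
      * exact: Mdisj.
      * exact: key.
      * by rewrite setIC; exact: key.
      * by [].
have [B0 MB0] : exists B0, M B0.
  apply: contrapT => h; apply: Munc; apply: (@subcnt _ _ set0) => // B MB.
  by apply: h; exists B.
pose R := A `\` U.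
pose P := [set B | M B /\ B <> B0] `|` [set B0 `|` R].
exists P; split.
- move=> Pc; apply: Munc; apply: (subcnt _ (cntU Pc (countable1 B0))) => B MB.
  by have [->|neq] := pselect (B = B0); [right|left; left].
split; last first.
- move=> B [[MB _]|->].
  + by have [[x ->] _] := Mmem B MB; exists x.
  + have [[x ->] _] := Mmem B0 MB0; exists x => z Fz; left.
    done.
split.
- move=> B C [[MB nB]|->] [[MC nC]|->] neq.
  + exact: Mdisj.
  + rewrite -subset0 => z [Bz [B0z|[_ nUz]]].
    * by have := Mdisj _ _ MB MB0 nB; rewrite -subset0; apply; split.
    * by apply: nUz; rewrite /U; exists B.
  + rewrite -subset0 => z [[B0z|[_ nUz]] Cz].
    * by have := Mdisj _ _ MC MB0 nC; rewrite -subset0; apply; split.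
    * by apply: nUz; rewrite /U; exists C.
  + by [].
- apply/seteqP; split.
  + move=> z [B [[MB _]|->] Bz].
    * exact: (Mmem B MB).2.
    * case: Bz => [B0z|[]//]; exact: (Mmem B0 MB0).2.
  + move=> z Az.
    have [[B MB Bz]|nUz] := pselect (U z).
    * have [eqB|neq] := pselect (B = B0).
      - by exists (B0 `|` R); [right|left; rewrite -eqB].
      - by exists B; [left|].
    * by exists (B0 `|` R); [right|right].
Qed.

Theorem theorem2p6 (S : Type) (op : S -> S -> S)
  (op_assoc : associative op)
  (S_uncountable : ~ countable [set: S])
  (no_idempotent : forall e : S, op e e <> e) :
  (forall A : set S, ~ countable A -> IPset op A ->
     exists P : set (set S),
       ~ countable P /\ is_partition_of P A /\ (forall B, P B -> IPset op B))
  <->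
  (forall A : set S, ~ countable A -> IPset op A).
Proof. split; [exact: dir1 | exact: dir2]. Qed.
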